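(* Let $R=X^\dagger X\in\mathcal C_{K_0}$ with $X=\bigoplus_k(I_{\mathcal H_k}\otimes X_k)\in\mathcal A'_G$ such that exactly one $X_k$ is nonzero and it has rank one. Then $R$ is extremal in $\mathcal C_{K_0}$.
   Context: Let $\mathcal H,\mathcal K$ be finite-dimensional Hilbert spaces and $g\mapsto U_g$, $g\mapsto V_g$ unitary representations of a group $G$ on $\mathcal H$ and $\mathcal K$; $U_g^*$ is the complex conjugate in a fixed basis. Decompose $\mathcal K\otimes\mathcal H=\bigoplus_k(\mathcal H_k\otimes\mathbb C^{m_k})$ according to the equivalence classes $k$ of irreducible components of $V_g\otimes U_g^*$ (irreducible space $\mathcal H_k$, multiplicity $m_k$). The commutant $\mathcal A'_G$ consists of operators $\bigoplus_k(I_{\mathcal H_k}\otimes M_k)$. Fix $0\le K_0\le I_{\mathcal H}$ and let $\mathcal C_{K_0}=\{R\in\mathcal A'_G: R\ge0,\ \operatorname{Tr}_{\mathcal K}[R]=K_0\}$. *)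

(* Defs.v *)
From HB Require Import structures.
From mathcomp Require Import all_boot all_order all_algebra.
From mathcomp Require monoid.
From mathcomp Require Import mxtens.

(* General (possibly infinite) groups, from mathcomp boot/monoid.v. *)
Notation mgroupType := monoid.Group.Exports.groupType.

Set Implicit Arguments.
Unset Strict Implicit.
Unset Printing Implicit Defensive.

Import Order.TTheory GRing.Theory Num.Theory.
Local Open Scope ring_scope.
Local Open Scope sesquilinear_scope.

(* Convention: operators are square matrices acting on COLUMN vectors;
   A ^t* is the adjoint (conjugate transpose); A *t B is the Kronecker
   product, with index (a, i) of K (x) H encoded as mxtens_index (a, i). *)

Definition psdmx {C : numClosedFieldType} {n : nat} (A : 'M[C]_n) : Prop :=
  A ^t* = A /\ forall v : 'cV[C]_n, 0 <= (v ^t* *m A *m v) 0 0.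

Definition conjmxC {C : numClosedFieldType} {m n : nat} (A : 'M[C]_(m, n)) :=
  map_mx (fun x : C => x^*) A.

Definition unitary_rep {C : numClosedFieldType} {G : mgroupType} {n : nat}
  (U : G -> 'M[C]_n) : Prop :=
  [/\ U (monoid.one : G) = 1%:M,
      forall g h : G, U (monoid.mul g h) = U g *m U h
    & forall g, U g \is unitarymx].

(* Irreducible unitary representation: nonzero dimension and no invariant
   subspace (column space of S) other than 0 and the whole space. *)
Definition irred_rep {C : numClosedFieldType} {G : mgroupType} {n : nat}
  (rho : G -> 'M[C]_n) : Prop :=
  [/\ unitary_rep rho, (0 < n)%N &
      forall S : 'M[C]_n,
        (forall g, ((rho g *m S)^T <= S^T)%MS) -> S = 0 \/ row_full S^T].

Definition equiv_rep {C : numClosedFieldType} {G : mgroupType} {n1 n2 : nat}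
  (rho1 : G -> 'M[C]_n1) (rho2 : G -> 'M[C]_n2) : Prop :=
  exists T : 'M[C]_(n1, n2),
    [/\ row_free T, row_full T & forall g, rho1 g *m T = T *m rho2 g].

(* The decomposition  K (x) H = (+)_k (H_k (x) C^{m_k})  of V_g (x) U_g^*,
   implemented by a unitary W : K (x) H -> (+)_k (C^{d_k} (x) C^{m_k}),
   where rho k is an irreducible representation on H_k = C^{d k}, the rho k
   are pairwise inequivalent, and m k >= 1 is the multiplicity. *)
Definition isotypic_decomposition {C : numClosedFieldType} {G : mgroupType}
  {dK dH r : nat} {d m : 'I_r -> nat}
  (V : G -> 'M[C]_dK) (U : G -> 'M[C]_dH)
  (rho : forall k : 'I_r, G -> 'M[C]_(d k))
  (W : 'M[C]_(\sum_(k < r) (d k * m k), dK * dH)) : Prop :=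
  [/\ W \is unitarymx /\ W ^t* \is unitarymx,
      forall k, irred_rep (rho k),
      forall k l, k != l -> ~ equiv_rep (rho k) (rho l),
      forall k, (0 < m k)%N &
      forall g, W *m (V g *t conjmxC (U g)) *m W ^t* =
                \mxdiag_(k < r) (rho k g *t (1%:M : 'M[C]_(m k)))].

(* The operator (+)_k (I_{H_k} (x) M_k), written in the original basis of K (x) H. *)
Definition blockop {C : numClosedFieldType} {dK dH r : nat} {d m : 'I_r -> nat}
  (W : 'M[C]_(\sum_(k < r) (d k * m k), dK * dH))
  (M : forall k : 'I_r, 'M[C]_(m k)) : 'M[C]_(dK * dH) :=
  W ^t* *m \mxdiag_(k < r) ((1%:M : 'M[C]_(d k)) *t M k) *m W.

Definition commutantG {C : numClosedFieldType} {dK dH r : nat} {d m : 'I_r -> nat}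
  (W : 'M[C]_(\sum_(k < r) (d k * m k), dK * dH)) (R : 'M[C]_(dK * dH)) : Prop :=
  exists M : forall k : 'I_r, 'M[C]_(m k), R = blockop W M.

Definition ptraceK {C : numClosedFieldType} {dK dH : nat}
  (R : 'M[C]_(dK * dH)) : 'M[C]_dH :=
  \matrix_(i, j) \sum_(a < dK) R (mxtens_index (a, i)) (mxtens_index (a, j)).

Definition CK0 {C : numClosedFieldType} {dK dH r : nat} {d m : 'I_r -> nat}
  (W : 'M[C]_(\sum_(k < r) (d k * m k), dK * dH)) (K0 : 'M[C]_dH)
  (R : 'M[C]_(dK * dH)) : Prop :=
  [/\ commutantG W R, psdmx R & ptraceK R = K0].

Definition extremal {C : numClosedFieldType} {n : nat}
  (S : 'M[C]_n -> Prop) (R : 'M[C]_n) : Prop :=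
  S R /\
  forall (R1 R2 : 'M[C]_n) (t : C), S R1 -> S R2 -> 0 < t < 1 ->
    R = t *: R1 + (1 - t) *: R2 -> R1 = R /\ R2 = R.

(* Main.v *)
Require Import Defs.
From HB Require Import structures.
From mathcomp Require Import all_boot all_order all_algebra.
From mathcomp Require monoid.
From mathcomp Require Import mxtens.
From mathcomp Require Import ring.
Import Order.TTheory GRing.Theory Num.Theory.
Local Open Scope ring_scope.
Local Open Scope sesquilinear_scope.
Set Implicit Arguments.
Unset Strict Implicit.
Unset Printing Implicit Defensive.

Section Aux.
Variable C : numClosedFieldType.

Lemma addE m n (A B : 'M[C]_(m, n)) i j : (A + B) i j = A i j + B i j.
Proof. by rewrite mxE. Qed.

Lemma scaleE m n a (A : 'M[C]_(m, n)) i j : (a *: A) i j = a * A i j.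
Proof. by rewrite mxE. Qed.

Lemma adjM m n p (A : 'M[C]_(m, n)) (B : 'M[C]_(n, p)) :
  (A *m B)^t* = B^t* *m A^t*.
Proof. by rewrite trmx_mul map_mxM. Qed.

Lemma adjD m n (A B : 'M[C]_(m, n)) : (A + B)^t* = A^t* + B^t*.
Proof. by apply/matrixP => i j; rewrite !mxE rmorphD. Qed.

Lemma adjZ m n (a : C) (A : 'M[C]_(m, n)) : (a *: A)^t* = a^* *: A^t*.
Proof. by apply/matrixP => i j; rewrite !mxE rmorphM. Qed.

Lemma adj_delta m n (i : 'I_m) (j : 'I_n) :
  (delta_mx i j : 'M[C]_(m, n))^t* = delta_mx j i.
Proof. by apply/matrixP => a b; rewrite !mxE conjC_nat andbC. Qed.

Lemma adj1 n : (1%:M : 'M[C]_n)^t* = 1%:M.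
Proof. by apply/matrixP => a b; rewrite !mxE conjC_nat eq_sym. Qed.

Lemma adj_entry m n (A : 'M[C]_(m, n)) i j : A^t* j i = (A i j)^*.
Proof. by rewrite !mxE. Qed.

Lemma form_conj m (u v : 'cV[C]_m) (A : 'M[C]_m) :
  ((u^t* *m A *m v) 0 0)^* = (v^t* *m A^t* *m u) 0 0.
Proof. by rewrite -adj_entry !adjM trmxCK mulmxA. Qed.

Lemma delta_form n (A : 'M[C]_n) i j :
  ((delta_mx i 0 : 'cV[C]_n)^t* *m A *m (delta_mx j 0 : 'cV[C]_n)) 0 0 = A i j.
Proof. by rewrite adj_delta -rowE -colE !mxE. Qed.

Lemma delta_row n p (B : 'M[C]_(n, p)) i :
  (delta_mx i 0 : 'cV[C]_n)^t* *m B = row i B.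
Proof. by rewrite adj_delta -rowE. Qed.

Lemma form_lin n (A : 'M[C]_n) (z y : 'cV[C]_n) s :
  ((z + s *: y)^t* *m A *m (z + s *: y)) 0 0 =
  (z^t* *m A *m z) 0 0 + s * (z^t* *m A *m y) 0 0
  + s^* * (y^t* *m A *m z) 0 0 + s^* * s * (y^t* *m A *m y) 0 0.
Proof.
rewrite adjD adjZ !mulmxDl !mulmxDr -!scalemxAl -!scalemxAr !mxE.
by rewrite !addrA mulrA.
Qed.

Lemma form_lin2 n (u v : 'cV[C]_n) (A B : 'M[C]_n) t s :
  (u^t* *m (t *: A + s *: B) *m v) 0 0 =
  t * (u^t* *m A *m v) 0 0 + s * (u^t* *m B *m v) 0 0.
Proof.
by rewrite mulmxDr mulmxDl -!scalemxAr -!scalemxAl addE !scaleE.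
Qed.

Lemma psd_form0 n (A : 'M[C]_n) (z : 'cV[C]_n) :
  psdmx A -> (z^t* *m A *m z) 0 0 = 0 -> A *m z = 0.
Proof.
move=> [Ah Apos] z0; apply/matrixP => i j; rewrite (ord1 j) [RHS]mxE.
set y : 'cV[C]_n := delta_mx i 0.
have ha : (y^t* *m A *m z) 0 0 = (A *m z) i 0 by rewrite -mulmxA delta_row mxE.
rewrite -ha; set a := (y^t* *m A *m z) 0 0.
have hb : (z^t* *m A *m y) 0 0 = a^*.
  by rewrite /a form_conj Ah.
set c := (y^t* *m A *m y) 0 0.
have c0 : 0 <= c := Apos y.
have c1 : 0 < c + 1 by rewrite ltr_wpDl.
set x := (c + 1)^-1.
have xc : x^* = x.
  by rewrite geC0_conj // /x invr_ge0 ltW.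
set s := - (x * a).
have := Apos (z + s *: y).
rewrite form_lin z0 hb -/a -/c.
have -> : s^* = - (x * a^*) by rewrite /s rmorphN rmorphM; congr (- (_ * _)); exact: xc.
have -> : 0 + s * a^* + - (x * a^*) * a + - (x * a^*) * s * c
   = - (a * a^*) * (x ^+ 2 * (c + 2)).
  rewrite /s /x; field; exact: lt0r_neq0.
rewrite mulNr oppr_ge0 mulrC pmulr_rle0; last first.
  by rewrite mulr_gt0 ?exprn_gt0 ?invr_gt0 // ltr_wpDl.
move=> h; have : a * a^* == 0.
  by rewrite eq_le h mul_conjC_ge0.
by rewrite mul_conjC_eq0 => /eqP.
Qed.


Lemma psd_conj n p (A : 'M[C]_n) (B : 'M[C]_(n, p)) :
  psdmx A -> psdmx (B^t* *m A *m B).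
Proof.
move=> [Ah Apos]; split; first by rewrite !adjM trmxCK Ah mulmxA.
by move=> v; have := Apos (B *m v); rewrite adjM !mulmxA.
Qed.

Lemma psd1 n : psdmx (1%:M : 'M[C]_n).
Proof.
split; first exact: adj1.
move=> v; rewrite mulmx1 mxE sumr_ge0 // => i _.
by rewrite !mxE mulrC mul_conjC_ge0.
Qed.

Lemma allz0 n p (A : 'M[C]_(n, p)) : (forall z : 'cV[C]_p, A *m z = 0) -> A = 0.
Proof.
move=> H; apply/matrixP => i j; have := H (delta_mx j 0).
by rewrite -colE => /(congr1 (fun M : 'cV[C]_n => M i 0)); rewrite !mxE.
Qed.

Lemma vec0 n (b : 'cV[C]_n) : (b^t* *m b) 0 0 = 0 -> b = 0.
Proof.
move=> h; have := @psd_form0 n 1%:M b (psd1 n); rewrite mulmx1 mul1mx; exact.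
Qed.

Lemma rank1_ext m (D : 'cV[C]_m) (B : 'rV[C]_m) (M1 M2 : 'M[C]_m) t :
  psdmx M1 -> psdmx M2 -> 0 < t -> t < 1 ->
  (D *m B)^t* *m (D *m B) = t *: M1 + (1 - t) *: M2 ->
  exists c, M1 = c *: ((D *m B)^t* *m (D *m B)).
Proof.
move=> hM1 hM2 t0 t1 hP.
set P := (D *m B)^t* *m (D *m B) in hP *.
have step0 : forall z : 'cV[C]_m, (z^t* *m P *m z) 0 0 = 0 -> M1 *m z = 0.
  move=> z; rewrite hP mulmxDr mulmxDl -!scalemxAr -!scalemxAl addE !scaleE => h.
  apply: psd_form0 => //.
  have f1 := hM1.2 z; have f2 := hM2.2 z.
  have t0' : 0 <= t := ltW t0.
  have t1' : 0 <= 1 - t by rewrite subr_ge0 ltW.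
  have := h; move/eqP; rewrite paddr_eq0 ?mulr_ge0 //.
  by case/andP; rewrite mulf_eq0 (gt_eqF t0) /= => /eqP.
have [P0|Pn0] := eqVneq P 0.
  exists (0 : C); rewrite scale0r; apply: allz0 => z; apply: step0.
  by rewrite P0 mulmx0 mul0mx mxE.
set b := B^t*.
set k := (D^t* *m D) 0 0.
have hPb : P = k *: (b *m b^t*).
  rewrite /P adjM -mulmxA (mulmxA _ D) [D^t* *m D]mx11_scalar mul_scalar_mx.
  by rewrite -scalemxAr /b trmxCK.
set n := (b^t* *m b) 0 0.
have n0 : 0 <= n by have := (psd1 m).2 b; rewrite mulmx1.
have nn0 : n != 0.
  apply/eqP => /vec0 b0; move: Pn0; rewrite hPb b0 mul0mx scaler0 eqxx //.
have step1 : forall z : 'cV[C]_m, b^t* *m z = 0 -> M1 *m z = 0.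
  move=> z bz; apply: step0; rewrite hPb -scalemxAr -scalemxAl !mulmxA.
  by rewrite -(mulmxA _ _ z) bz mulmx0 scaler0 mxE.
set Pi := n^-1 *: (b *m b^t*).
have hQ : M1 *m (1%:M - Pi) = 0.
  apply: allz0 => w; rewrite -mulmxA; apply: step1.
  rewrite mulmxA mulmxBr mulmx1 /Pi -scalemxAr mulmxA [b^t* *m b]mx11_scalar.
  by rewrite mul_scalar_mx scalerA -/n mulVf // scale1r subrr mul0mx.
have e1 : M1 = M1 *m Pi by apply/eqP; rewrite -subr_eq0 -{1}[M1]mulmx1 -mulmxBr hQ.
have e2 : M1 = Pi *m M1.
  have ninv : (n^-1)^* = n^-1 by rewrite geC0_conj // invr_ge0.
  by rewrite -{1}hM1.1 {1}e1 adjM hM1.1 /Pi adjZ ninv adjM trmxCK.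
set s := (b^t* *m M1 *m b) 0 0.
exists (n^-1 * n^-1 * s / k).
rewrite hPb scalerA divfK; last first.
  by apply: contra_neq Pn0 => k0; rewrite hPb k0 scale0r.
rewrite {1}e2 {1}e1 /Pi -scalemxAl -!scalemxAr scalerA.
have -> : b *m b^t* *m (M1 *m (b *m b^t*)) = b *m (b^t* *m M1 *m b) *m b^t*.
  by rewrite !mulmxA.
by rewrite [b^t* *m M1 *m b]mx11_scalar mul_mx_scalar -scalemxAl scalerA.
Qed.

End Aux.

Section Blk.
Variable C : numClosedFieldType.
Variables (r : nat) (d m : 'I_r -> nat).
Local Notation N := (\sum_(i < r) (d i * m i))%N.

Definition sel (k : 'I_r) : 'M[C]_(N, d k * m k) :=
  submxrow (1%:M : 'M[C]_N) k.

Lemma sel_conj (A : 'M[C]_N) k : (sel k)^t* *m A *m sel k = submxblock A k k.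
Proof.
have -> : (sel k)^t* = submxcol (1%:M : 'M[C]_N) k.
  by apply/matrixP => i j; rewrite !mxE conjC_nat eq_sym.
rewrite /sel /submxrow /submxcol mulmx_colsub mulmx1 mul_rowsub_mx mul1mx.
by apply/matrixP => i j; rewrite !mxE.
Qed.

Lemma adj_tens p q p' q' (A : 'M[C]_(p, q)) (B : 'M[C]_(p', q')) :
  (A *t B)^t* = A^t* *t B^t*.
Proof. by rewrite trmx_tens map_mxT. Qed.

Lemma tens11 (Q : 'M[C]_1) : ((1%:M : 'M[C]_1) *t Q) 0 0 = Q 0 0.
Proof. by rewrite tens_scalar1mx castmxE !ord1. Qed.

Definition vecb (n : nat) (W : 'M[C]_(N, n)) k (hd : (0 < d k)%N)
  (z : 'cV[C]_(m k)) : 'cV[C]_n :=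
  W^t* *m (sel k *m ((delta_mx (Ordinal hd) 0 : 'cV[C]_(d k)) *t z)).

Lemma blk_form dK dH (W : 'M[C]_(N, dK * dH)) (M : forall k, 'M[C]_(m k)) k
  (hd : (0 < d k)%N) (y z : 'cV[C]_(m k)) :
  W *m W^t* = 1%:M ->
  ((vecb W hd y)^t* *m blockop W M *m vecb W hd z) 0 0 = (y^t* *m M k *m z) 0 0.
Proof.
move=> hW; set e0 : 'cV[C]_(d k) := delta_mx (Ordinal hd) 0.
rewrite /vecb /blockop !adjM trmxCK.
have -> : (e0 *t y)^t* *m (sel k)^t* *m W *m (W^t* *m
    \mxdiag_(k0 < r) ((1%:M : 'M[C]_(d k0)) *t M k0) *m W) *m
    (W^t* *m (sel k *m (e0 *t z))) =
  (e0 *t y)^t* *m ((sel k)^t* *m \mxdiag_(k0 < r) ((1%:M : 'M[C]_(d k0)) *t M k0)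
     *m sel k) *m (e0 *t z).
  by rewrite !mulmxA -!(mulmxA _ W) hW !mulmx1.
rewrite sel_conj submxblock_diag adj_tens !tensmx_mul.
rewrite /e0 adj_delta mulmx1 mul_delta_mx.
have -> : (delta_mx 0 0 : 'M[C]_1) = 1%:M by apply/matrixP => i j; rewrite !ord1 !mxE.
exact: tens11.
Qed.

End Blk.

Section Blk2.
Variable C : numClosedFieldType.
Variables (r : nat) (p : 'I_r -> nat).
Local Notation N := (\sum_(i < r) p i)%N.

Lemma mxdiag_mul (A B : forall i, 'M[C]_(p i)) :
  \mxdiag_i A i *m \mxdiag_i B i = \mxdiag_i (A i *m B i).
Proof.
rewrite {2}/mxdiag mul_mxdiag_mxblock /mxdiag; apply: eq_mxblock => i j.
by case: eqP => [->|_]; rewrite ?conform_mx_id ?mulmx0.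
Qed.

Lemma mxdiag_scale c (B : forall i, 'M[C]_(p i)) :
  \mxdiag_i (c *: B i) = c *: \mxdiag_i B i.
Proof.
rewrite -mul_scalar_mx -(mxdiagZ (p_ := p)) mxdiag_mul.
by apply: eq_mxdiag => i; rewrite mul_scalar_mx.
Qed.

Lemma mxdiag_adj (B : forall i, 'M[C]_(p i)) :
  (\mxdiag_i B i)^t* = \mxdiag_i (B i)^t*.
Proof.
rewrite tr_mxdiag; apply/mxblockP => i j.
have e : forall A : 'M[C]_N, submxblock (map_mx Num.conj A) i j = map_mx Num.conj (submxblock A i j).
  by move=> A; apply/matrixP => a b; rewrite !mxE.
rewrite e /mxdiag !mxblockK; case: eqP => [e'|_]; last by rewrite map_mx0.
by subst j; rewrite !conform_mx_id.
Qed.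

End Blk2.

Section Tens1.
Variable C : numClosedFieldType.
Variables (a b : nat).

Lemma tens1_adj (A : 'M[C]_b) : ((1%:M : 'M[C]_a) *t A)^t* = 1%:M *t A^t*.
Proof. by rewrite adj_tens adj1. Qed.

Lemma tens1_mul (A B : 'M[C]_b) :
  ((1%:M : 'M[C]_a) *t A) *m (1%:M *t B) = 1%:M *t (A *m B).
Proof. by rewrite tensmx_mul mulmx1. Qed.

Lemma tens1_scale c (A : 'M[C]_b) :
  (1%:M : 'M[C]_a) *t (c *: A) = c *: (1%:M *t A).
Proof. by apply/matrixP => i j; rewrite !mxE mulrCA. Qed.

End Tens1.

Section Blk3.
Variable C : numClosedFieldType.
Variables (r : nat) (d m : 'I_r -> nat) (dK dH : nat).
Local Notation N := (\sum_(i < r) (d i * m i))%N.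

Lemma blockop_scale (W : 'M[C]_(N, dK * dH)) (M : forall k, 'M[C]_(m k)) c :
  blockop W (fun k => c *: M k) = c *: blockop W M.
Proof.
rewrite /blockop.
under eq_mxdiag do rewrite tens1_scale.
by rewrite mxdiag_scale -scalemxAr -scalemxAl.
Qed.

Lemma blockop_sq (W : 'M[C]_(N, dK * dH)) (X : forall k, 'M[C]_(m k)) :
  W *m W^t* = 1%:M ->
  (blockop W X)^t* *m blockop W X = blockop W (fun k => (X k)^t* *m X k).
Proof.
move=> hW; rewrite /blockop !adjM trmxCK mxdiag_adj.
rewrite !mulmxA -(mulmxA _ W) hW mulmx1.
rewrite -[in LHS](mulmxA (W^t*)) mxdiag_mul.
congr (_ *m _ *m _); apply: eq_mxdiag => i.
by rewrite tens1_adj tens1_mul.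
Qed.

Lemma ptraceK_scale c (R : 'M[C]_(dK * dH)) : ptraceK (c *: R) = c *: ptraceK R.
Proof.
apply/matrixP => i j; rewrite !mxE mulr_sumr; apply: eq_bigr => a _.
by rewrite mxE.
Qed.

End Blk3.

Section Blk4.
Variable C : numClosedFieldType.
Variables (r : nat) (d m : 'I_r -> nat) (dK dH : nat).
Local Notation N := (\sum_(i < r) (d i * m i))%N.

Lemma block_entry (W : 'M[C]_(N, dK * dH)) (M : forall k, 'M[C]_(m k)) k
  (hd : (0 < d k)%N) i j : W *m W^t* = 1%:M ->
  M k i j = ((vecb W hd (delta_mx i 0))^t* *m blockop W M *m
              vecb W hd (delta_mx j 0)) 0 0.
Proof. by move=> hW; rewrite blk_form // delta_form. Qed.

Lemma block_psd (W : 'M[C]_(N, dK * dH)) (M : forall k, 'M[C]_(m k)) k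
  (hd : (0 < d k)%N) : W *m W^t* = 1%:M ->
  psdmx (blockop W M) -> psdmx (M k).
Proof.
move=> hW [hh hp]; split.
  apply/matrixP => i j; rewrite !mxE (block_entry M hd j i hW) form_conj hh.
  exact: (esym (block_entry M hd i j hW)).
by move=> v; rewrite -(blk_form M hd v v hW); apply: hp.
Qed.

Lemma block_lin (W : 'M[C]_(N, dK * dH)) (P M1 M2 : forall k, 'M[C]_(m k))
  k (hd : (0 < d k)%N) t s : W *m W^t* = 1%:M ->
  blockop W P = t *: blockop W M1 + s *: blockop W M2 ->
  P k = t *: M1 k + s *: M2 k.
Proof.
move=> hW e; apply/matrixP => i j.
rewrite addE !scaleE (block_entry P hd i j hW) (block_entry M1 hd i j hW).
by rewrite (block_entry M2 hd i j hW) e form_lin2.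
Qed.

Lemma blockop_ext (W : 'M[C]_(N, dK * dH)) (M M' : forall k, 'M[C]_(m k)) :
  (forall k, M k = M' k) -> blockop W M = blockop W M'.
Proof. by move=> e; rewrite /blockop (eq_mxdiag (fun k => congr1 _ (e k))). Qed.

End Blk4.

Section Ptr.
Variable C : numClosedFieldType.
Variables (dK dH : nat).

Lemma ptr0 (R : 'M[C]_(dK * dH)) : psdmx R -> ptraceK R = 0 -> R = 0.
Proof.
move=> hR T0.
have dg : forall j, R j j = 0.
  move=> j; case: (mxtens_indexP j) => a i.
  have := congr1 (fun M : 'M[C]_dH => M i i) T0; rewrite !mxE.
  move/psumr_eq0P; apply => // b _.
  by rewrite -delta_form; apply: hR.2.
apply/matrixP => i j.
have := psd_form0 (z := delta_mx j 0) hR; rewrite delta_form dg => /(_ erefl).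
by rewrite -colE => /(congr1 (fun M : 'cV[C]_(dK * dH) => M i 0)); rewrite !mxE.
Qed.

End Ptr.

Theorem mainTheorem14 (C : numClosedFieldType) (G : mgroupType) (dH dK : nat)
  (U : G -> 'M[C]_dH) (V : G -> 'M[C]_dK)
  (r : nat) (d m : 'I_r -> nat) (rho : forall k : 'I_r, G -> 'M[C]_(d k))
  (W : 'M[C]_(\sum_(k < r) (d k * m k), dK * dH)) (K0 : 'M[C]_dH)
  (Xk : forall k : 'I_r, 'M[C]_(m k)) :
  unitary_rep U -> unitary_rep V ->
  isotypic_decomposition V U rho W ->
  psdmx K0 -> psdmx (1%:M - K0) ->
  (exists k0 : 'I_r, \rank (Xk k0) = 1%N /\ forall k, k != k0 -> Xk k = 0) ->
  CK0 W K0 ((blockop W Xk) ^t* *m blockop W Xk) ->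
  extremal (CK0 W K0) ((blockop W Xk) ^t* *m blockop W Xk).
Proof.
move=> hU hV [[hWu hWtu] hirr _ _ _] hK0 hK1 [k0 [hrk hz]] hC.
have hW : W *m W^t* = 1%:M by apply/unitarymxP.
have hd : forall k, (0 < d k)%N by move=> k; case: (hirr k).
set P := fun k => (Xk k)^t* *m Xk k.
have hR : (blockop W Xk)^t* *m blockop W Xk = blockop W P by rewrite blockop_sq.
rewrite hR in hC *.
set R := blockop W P.
have hT : ptraceK R = K0 by case: hC.
have hRpsd : psdmx R by case: hC.
have decomp : forall k, exists D : 'cV[C]_(m k), exists B : 'rV[C]_(m k),
    Xk k = D *m B.
  move=> k; have [->|nk] := eqVneq k k0.
    have hs : (Xk k0 <= row_base (Xk k0))%MS by rewrite eq_row_base.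
    case/submxP: hs => D hD.
    move: D (row_base (Xk k0)) hD; rewrite hrk => D B hD.
    by exists D, B.
  by exists 0, 0; rewrite hz // mul0mx.
have main : forall (M1 M2 : forall k, 'M[C]_(m k)) (t : C),
    psdmx (blockop W M1) -> psdmx (blockop W M2) ->
    ptraceK (blockop W M1) = K0 ->
    0 < t -> t < 1 -> R = t *: blockop W M1 + (1 - t) *: blockop W M2 ->
    blockop W M1 = R.
  move=> M1 M2 t p1 p2 tr1 t0 t1 e.
  have ex : forall k, exists c, M1 k = c *: P k.
    move=> k; have [D [B hX]] := decomp k.
    have := rank1_ext (block_psd (hd k) hW p1) (block_psd (hd k) hW p2) t0 t1.
    rewrite /P /= hX; apply.
    rewrite -hX; exact: (block_lin (hd k) hW e).
  have [c hc] := ex k0.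
  have hall : forall k, M1 k = c *: P k.
    move=> k; have [->|nk] := eqVneq k k0; first exact: hc.
    have [c' hc'] := ex k.
    by rewrite hc' /P /= hz // mulmx0 !scaler0.
  have e1 : blockop W M1 = c *: R by rewrite -blockop_scale; apply: blockop_ext.
  rewrite e1 in tr1 *; rewrite ptraceK_scale hT in tr1.
  have [K00|K0n] := eqVneq K0 0.
    exfalso.
    have R0 : R = 0 by apply: ptr0 => //; rewrite hT.
    have P0 : P k0 = 0.
      apply/matrixP => i j; rewrite (block_entry P (hd k0) i j hW) -/R R0.
      by rewrite mulmx0 mul0mx !mxE.
    have X0 : Xk k0 = 0.
      apply: allz0 => z; apply: vec0.
      have := congr1 (fun M : 'M[C]_(m k0) => (z^t* *m M *m z) 0 0) P0.
      by rewrite /P /= mulmx0 mul0mx adjM !mulmxA => ->; rewrite mxE.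
    by move: hrk; rewrite X0 mxrank0.
  have : (c - 1) *: K0 = 0 by rewrite scalerBl scale1r tr1 subrr.
  move/eqP; rewrite scaler_eq0 (negbTE K0n) orbF subr_eq0 => /eqP ->.
  by rewrite scale1r.
split; first exact: hC.
move=> R1 R2 t [[M1 ->] p1 tr1] [[M2 ->] p2 tr2] /andP[t0 t1] e.
split; first exact: (main M1 M2 t).
apply: (main M2 M1 (1 - t)) => //.
- by rewrite subr_gt0.
- by rewrite gtrDl oppr_lt0.
- by rewrite subKr addrC.
Qed.
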